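(* Consider the descriptor system $Ex_{k+1}=Ax_k+Bu_k+w_k$, $y_k=Hx_k+v_{k-1}$ with $E,A\in\mathbb{R}^{n_1\times n}$, $B\in\mathbb{R}^{n_1\times q}$, $H\in\mathbb{R}^{m\times n}$, where $\begin{bmatrix}E^T&H^T\end{bmatrix}^T$ has full column rank, and let $P_0,Q,R$ be symmetric positive definite, $P_0^{(-)}=AP_0A^T+Q$. Let $\bar x_0$, inputs $u_0,\dots,u_{T-1}$, measurements $y_1,\dots,y_T$ be given, and let $N$ be an integer with $1\le N\le T-1$. Define the full information objective $$J_T(x_1,\dots,x_T)=\|Ex_1-A\bar x_0-Bu_0\|^2_{P_0^{(-)}}+\sum_{k=1}^{T-1}\|Ex_{k+1}-Ax_k-Bu_k\|_Q^2+\sum_{k=1}^{T}\|y_k-Hx_k\|_R^2.$$ Let $\hat x_k^{(+)},P_k^{(+)},P_k^{(-)}$ be given by the recursion in the context, and for $k\ge1$ define $$\Gamma_k^{sm}=\big((P_k^{(+)})^{-1}+A^TQ^{-1}A\big)^{-1},\qquad \hat x_k^{sm}(x_{k+1})=\hat x_k^{(+)}+\Gamma_k^{sm}A^TQ^{-1}\big(Ex_{k+1}-A\hat x_k^{(+)}-Bu_k\big),$$ and $$SC(\{x_k\}_{T-N}^T)=\|Ex_{T-N}-A\hat x^{(+)}_{T-N-1}-Bu_{T-N-1}\|^2_{P^{(-)}_{T-N-1}}+\sum_{k=T-N}^{T-1}\|Ex_{k+1}-Ax_k-Bu_k\|_Q^2+\sum_{k=T-N}^{T}\|y_k-Hx_k\|_R^2.$$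 Then there is a constant $c$ independent of $x_1,\dots,x_T$ such that for all $x_1,\dots,x_T\in\mathbb{R}^n$, $$J_T(x_1,\dots,x_T)=\sum_{k=1}^{T-N-1}\|x_k-\hat x_k^{sm}(x_{k+1})\|^2_{\Gamma_k^{sm}}+SC(\{x_k\}_{T-N}^T)+c.$$ In particular, the full information problem of minimizing $J_T$ subject to any constraints on $x_1,\dots,x_T$ is equivalent to minimizing the right-hand side subject to the same constraints.
   Context: Notation: for symmetric positive definite $S$, $\|z\|_S^2:=z^TS^{-1}z$. Recursion: $\hat x_0^{(+)}=\bar x_0$, $P_0^{(+)}=P_0$, $P_0^{(-)}=AP_0A^T+Q$, and for $k\ge1$: $P_k^{(+)}=(E^T(P_{k-1}^{(-)})^{-1}E+H^TR^{-1}H)^{-1}$, $P_k^{(-)}=AP_k^{(+)}A^T+Q$, $\hat x_k^{(+)}=P_k^{(+)}H^TR^{-1}y_k+P_k^{(+)}E^T(P_{k-1}^{(-)})^{-1}(A\hat x_{k-1}^{(+)}+Bu_{k-1})$. An empty sum is zero. *)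

(* Defs.v *)
From HB Require Import structures.
From mathcomp Require Import all_boot all_order all_algebra.
Set Implicit Arguments. Unset Strict Implicit. Unset Printing Implicit Defensive.
Import Order.TTheory GRing.Theory Num.Theory.
Local Open Scope ring_scope.

Definition spd (R : realFieldType) (p : nat) (S : 'M[R]_p) : Prop :=
  S^T = S /\ forall z : 'cV[R]_p, z != 0 -> 0 < (z^T *m S *m z) 0 0.

(* ||z||_S^2 := z^T S^{-1} z *)
Definition wnorm (R : realFieldType) (p : nat) (S : 'M[R]_p) (z : 'cV[R]_p) : R :=
  (z^T *m invmx S *m z) 0 0.

Section Filter.
Variables (R : realFieldType) (n1 n q m : nat).
Variables (E A : 'M[R]_(n1, n)) (B : 'M[R]_(n1, q)) (H : 'M[R]_(m, n)).
Variables (P0 : 'M[R]_n) (Q : 'M[R]_n1) (Rm : 'M[R]_m).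
Variables (xbar0 : 'cV[R]_n) (u : nat -> 'cV[R]_q) (y : nat -> 'cV[R]_m).

Fixpoint kf (k : nat) : 'M[R]_n * 'cV[R]_n :=
  match k with
  | 0%N => (P0, xbar0)
  | k'.+1 =>
      let: (Pp, xh) := kf k' in
      let Pm := A *m Pp *m A^T + Q in
      let Pnew := invmx (E^T *m invmx Pm *m E + H^T *m invmx Rm *m H) in
      (Pnew, Pnew *m H^T *m invmx Rm *m y k
             + Pnew *m E^T *m invmx Pm *m (A *m xh + B *m u k'))
  end.

Definition Pplus (k : nat) : 'M[R]_n := (kf k).1.
Definition xhat (k : nat) : 'cV[R]_n := (kf k).2.
Definition Pminus (k : nat) : 'M[R]_n1 := A *m Pplus k *m A^T + Q.

Definition Gsm (k : nat) : 'M[R]_n :=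
  invmx (invmx (Pplus k) + A^T *m invmx Q *m A).

Definition xsm (k : nat) (xnext : 'cV[R]_n) : 'cV[R]_n :=
  xhat k + Gsm k *m A^T *m invmx Q *m (E *m xnext - A *m xhat k - B *m u k).

Definition JT (T : nat) (x : nat -> 'cV[R]_n) : R :=
  wnorm (A *m P0 *m A^T + Q) (E *m x 1%N - A *m xbar0 - B *m u 0%N)
  + \sum_(1 <= k < T) wnorm Q (E *m x k.+1 - A *m x k - B *m u k)
  + \sum_(1 <= k < T.+1) wnorm Rm (y k - H *m x k).

Definition SC (T N : nat) (x : nat -> 'cV[R]_n) : R :=
  wnorm (Pminus (T - N - 1)) (E *m x (T - N)%N - A *m xhat (T - N - 1) - B *m u (T - N - 1)%N)
  + \sum_(T - N <= k < T) wnorm Q (E *m x k.+1 - A *m x k - B *m u k)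
  + \sum_(T - N <= k < T.+1) wnorm Rm (y k - H *m x k).

End Filter.

(* Main.v *)
Require Import Defs.
From HB Require Import structures.
From mathcomp Require Import all_boot all_order all_algebra.
From mathcomp Require Import ring lra zify.
Import Order.TTheory GRing.Theory Num.Theory.
Local Open Scope ring_scope.

Section BF.
Context {R : realFieldType}.

Definition bf (p r : nat) (S : 'M[R]_(p, r)) (v : 'cV[R]_p) (w : 'cV[R]_r) : R := (v^T *m S *m w) 0 0.
Arguments bf {p r}.

Lemma bfDl p (S : 'M[R]_p) (v1 v2 w : 'cV_p) : bf S (v1 + v2) w = bf S v1 w + bf S v2 w.
Proof. by rewrite /bf raddfD /= !mulmxDl mxE. Qed.
Lemma bfBl p (S : 'M[R]_p) (v1 v2 w : 'cV_p) : bf S (v1 - v2) w = bf S v1 w - bf S v2 w.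
Proof. by rewrite /bf raddfB /= !mulmxBl !mxE. Qed.
Lemma bfDr p (S : 'M[R]_p) (v w1 w2 : 'cV_p) : bf S v (w1 + w2) = bf S v w1 + bf S v w2.
Proof. by rewrite /bf !mulmxDr mxE. Qed.
Lemma bfBr p (S : 'M[R]_p) (v w1 w2 : 'cV_p) : bf S v (w1 - w2) = bf S v w1 - bf S v w2.
Proof. by rewrite /bf !mulmxBr !mxE. Qed.
Lemma bfDm p (S1 S2 : 'M[R]_p) (v w : 'cV_p) : bf (S1 + S2) v w = bf S1 v w + bf S2 v w.
Proof. by rewrite /bf mulmxDr mulmxDl mxE. Qed.
Lemma bfBm p (S1 S2 : 'M[R]_p) (v w : 'cV_p) : bf (S1 - S2) v w = bf S1 v w - bf S2 v w.
Proof. by rewrite /bf mulmxBr mulmxBl !mxE. Qed.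
Lemma bfMl p r t (S : 'M[R]_(p, t)) (M : 'M[R]_(p, r)) (v : 'cV_r) (w : 'cV_t) :
  bf S (M *m v) w = bf (M^T *m S) v w.
Proof. by rewrite /bf trmx_mul !mulmxA. Qed.
Lemma bfMr p r t (S : 'M[R]_(t, p)) (M : 'M[R]_(p, r)) (v : 'cV_t) (w : 'cV_r) :
  bf S v (M *m w) = bf (S *m M) v w.
Proof. by rewrite /bf !mulmxA. Qed.
Lemma bfC p (S : 'M[R]_p) (v w : 'cV_p) : S^T = S -> bf S v w = bf S w v.
Proof.
move=> hS; rewrite /bf.
have -> : (v^T *m S *m w) 0 0 = ((v^T *m S *m w)^T) 0 0 by rewrite [RHS]mxE.
by rewrite !trmx_mul trmxK hS mulmxA.
Qed.
End BF.
Arguments bf {R p r}.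

Section SPD.
Context {R : realFieldType}.

Lemma bf0 p (S : 'M[R]_p) : bf S 0 0 = 0.
Proof. by rewrite /bf mulmx0 mxE. Qed.

Lemma spd_ge0 {p} {S : 'M[R]_p} z : spd S -> 0 <= bf S z z.
Proof.
move=> [_ hS]; have [->|nz] := eqVneq z 0; first by rewrite bf0.
exact: ltW (hS z nz).
Qed.

Lemma spd_gt0 {p} {S : 'M[R]_p} {z} : spd S -> z != 0 -> 0 < bf S z z.
Proof. by move=> [_ hS]; apply: hS. Qed.

Lemma psd_cong {p r} {S : 'M[R]_p} (M : 'M[R]_(p, r)) z :
  spd S -> 0 <= bf (M^T *m S *m M) z z.
Proof. by move=> hS; rewrite -bfMr -bfMl; apply: spd_ge0. Qed.

Lemma sym_cong {p r} {S : 'M[R]_p} (M : 'M[R]_(p, r)) :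
  S^T = S -> (M^T *m S *m M)^T = M^T *m S *m M.
Proof. by move=> hS; rewrite !trmx_mul trmxK hS mulmxA. Qed.

Lemma spd_addpsd {p} {S M : 'M[R]_p} :
  spd S -> M^T = M -> (forall z, 0 <= bf M z z) -> spd (S + M).
Proof.
move=> hS hM hMp; split; first by rewrite raddfD /= hS.1 hM.
move=> z nz; change (0 < bf (S + M) z z); rewrite bfDm.
exact: ltr_wpDr (hMp z) (spd_gt0 hS nz).
Qed.

Lemma spd_unit {p} {S : 'M[R]_p} : spd S -> S \in unitmx.
Proof.
move=> hS; rewrite unitmxE unitfE; apply/negP => /det0P [v nz hv].
have := spd_gt0 hS (z := v^T); rewrite trmx_eq0 => /(_ nz).
by rewrite /bf trmxK hv mul0mx mxE ltxx.
Qed.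

Lemma spd_inv {p} {S : 'M[R]_p} : spd S -> spd (invmx S).
Proof.
move=> hS; have hu := spd_unit hS; split; first by rewrite trmx_inv hS.1.
move=> z nz; set w := invmx S *m z.
have hz : z = S *m w by rewrite /w mulKVmx.
have wnz : w != 0 by apply: contraNneq nz => hw; rewrite hz hw mulmx0.
have := spd_gt0 hS wnz; congr (_ < _).
by rewrite hz -!/(bf _ _ _) bfMl bfMr hS.1 -mulmxA mulVmx // mulmx1.
Qed.

Lemma spd_Pm {n1 n} {P : 'M[R]_n} {Q : 'M[R]_n1} (A : 'M[R]_(n1, n)) :
  spd P -> spd Q -> spd (A *m P *m A^T + Q).
Proof.
move=> hP hQ; rewrite addrC; apply: spd_addpsd => //.
  by have := sym_cong (A^T) hP.1; rewrite trmxK.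
by move=> z; have := psd_cong (A^T) z hP; rewrite trmxK.
Qed.

Lemma spd_M {p m n} (E : 'M[R]_(p, n)) (H : 'M[R]_(m, n)) {S Rr} :
  \rank (col_mx E H) = n -> spd S -> spd Rr ->
  spd (E^T *m S *m E + H^T *m Rr *m H).
Proof.
move=> hr hS hR; split.
  by rewrite raddfD /= sym_cong ?sym_cong //; [exact: hR.1 | exact: hS.1].
move=> z nz; change (0 < bf (E^T *m S *m E + H^T *m Rr *m H) z z).
rewrite bfDm.
have h1 : forall r (M : 'M[R]_(r, n)) (S' : 'M[R]_r), bf (M^T *m S' *m M) z z = bf S' (M *m z) (M *m z).
  by move=> r M S'; rewrite bfMr bfMl mulmxA.
rewrite !h1.
have [hE|hE] := eqVneq (E *m z) 0; last first.
  exact: ltr_wpDr (spd_ge0 _ hR) (spd_gt0 hS hE).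
have [hH|hH] := eqVneq (H *m z) 0; last first.
  exact: ltr_wpDl (spd_ge0 _ hS) (spd_gt0 hR hH).
exfalso; move: nz; apply/negP; rewrite negbK.
have /row_fullP [C hC] : row_full (col_mx E H) by rewrite /row_full hr.
by rewrite -[z]mul1mx -hC -mulmxA mul_col_mx hE hH col_mx0 mulmx0.
Qed.
End SPD.

Section Wood.
Context {R : realFieldType}.

Lemma wood_core {n1 n} (A : 'M[R]_(n1, n)) (P Pi G Gi : 'M[R]_n) (W : 'M[R]_(n, n1)) :
  P *m Pi = 1%:M -> Gi *m G = 1%:M -> Gi = Pi + W *m A ->
  A *m P *m W + 1%:M - (A *m P *m W + 1%:M) *m (A *m G *m W) = 1%:M.
Proof.
move=> hPPi hGG hGi.
have hWA : W *m A = Gi - Pi by rewrite hGi addrC addKr.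
have cP : forall k (B : 'M[R]_(n, k)), P *m (Pi *m B) = B by move=> k B; rewrite mulmxA hPPi mul1mx.
have cG : forall k (B : 'M[R]_(n, k)), Gi *m (G *m B) = B by move=> k B; rewrite mulmxA hGG mul1mx.
rewrite mulmxDl mul1mx -!mulmxA (mulmxA W A) hWA mulmxBl cG mulmxBr cP mulmxBr.
by rewrite subrK addrAC subrr add0r.
Qed.

Lemma woodbury {n1 n} (A : 'M[R]_(n1, n)) (P : 'M[R]_n) (Q : 'M[R]_n1) :
  P \in unitmx -> Q \in unitmx ->
  (invmx P + A^T *m invmx Q *m A) \in unitmx ->
  (A *m P *m A^T + Q) \in unitmx ->
  invmx (A *m P *m A^T + Q) =
  invmx Q - invmx Q *m A *m invmx (invmx P + A^T *m invmx Q *m A) *m (A^T *m invmx Q).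
Proof.
move=> hP hQ hG hPm.
suff h : (A *m P *m A^T + Q) *m (invmx Q - invmx Q *m A *m
      invmx (invmx P + A^T *m invmx Q *m A) *m (A^T *m invmx Q)) = 1%:M.
  by rewrite -[LHS]mulmx1 -h mulmxA mulVmx // mul1mx.
have e1 : (A *m P *m A^T + Q) *m invmx Q = A *m P *m (A^T *m invmx Q) + 1%:M.
  by rewrite mulmxDl mulmxV // -!mulmxA.
have e3 : (A *m P *m A^T + Q) *m (invmx Q *m A *m
      invmx (invmx P + A^T *m invmx Q *m A) *m (A^T *m invmx Q)) =
   ((A *m P *m A^T + Q) *m invmx Q) *m (A *m
      invmx (invmx P + A^T *m invmx Q *m A) *m (A^T *m invmx Q)) by rewrite !mulmxA.
rewrite mulmxBr e3 e1.
apply: wood_core; [exact: mulmxV | exact: mulmxV | by []].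
Qed.
End Wood.

Section Id2.
Context {R : realFieldType}.

Lemma bfT {p r} (S : 'M[R]_(p, r)) v w : bf S v w = bf S^T w v.
Proof.
rewrite /bf.
have -> : (v^T *m S *m w) 0 0 = ((v^T *m S *m w)^T) 0 0 by rewrite [RHS]mxE.
by rewrite !trmx_mul trmxK mulmxA.
Qed.

Lemma id2_core {n1 n} (A : 'M[R]_(n1, n)) (Pi G Gi : 'M[R]_n) (Qi Pmi : 'M[R]_n1)
   (W : 'M[R]_(n, n1)) d r :
  Qi^T = Qi -> Gi^T = Gi -> G^T = G -> Gi *m G = 1%:M ->
  W = A^T *m Qi -> Gi = Pi + W *m A -> Pmi = Qi - Qi *m A *m G *m W ->
  bf Pi d d + bf Qi (r - A *m d) (r - A *m d) =
  bf Gi (d - G *m (W *m r)) (d - G *m (W *m r)) + bf Pmi r r.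
Proof.
move=> hQ hGi hG hGG hW eGi ePm.
have a1 : bf Qi r (A *m d) = bf W d r by rewrite bfMr bfT trmx_mul hQ hW.
have a2 : bf Qi (A *m d) r = bf W d r by rewrite bfMl hW.
have a3 : bf Qi (A *m d) (A *m d) = bf (W *m A) d d by rewrite bfMl bfMr hW.
have a4 : bf Gi d d = bf Pi d d + bf (W *m A) d d by rewrite eGi bfDm.
have a5 : bf Gi d (G *m (W *m r)) = bf W d r by rewrite bfMr bfMr hGG mul1mx.
have a6 : bf Gi (G *m (W *m r)) d = bf W d r by rewrite bfT hGi a5.
have a7 : bf Gi (G *m (W *m r)) (G *m (W *m r)) = bf (Qi *m A *m G *m W) r r.
  by rewrite bfMl bfMr -mulmxA hGG mulmx1 hG bfMl bfMr hW trmx_mul trmxK hQ !mulmxA.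
have a8 : bf Pmi r r = bf Qi r r - bf (Qi *m A *m G *m W) r r by rewrite ePm bfBm.
rewrite !bfBl !bfBr a1 a2 a3 a4 a5 a6 a7 a8.
ring.
Qed.
End Id2.

Section Id1.
Context {R : realFieldType}.

Lemma bf1M {p r} (M : 'M[R]_(p, r)) v w : bf M v w = bf 1%:M v (M *m w).
Proof. by rewrite bfMr mul1mx. Qed.

Lemma id1_core {p m n} (E : 'M[R]_(p, n)) (H : 'M[R]_(m, n)) Si Ri (M : 'M[R]_n)
   xh a yv x :
  Si^T = Si -> Ri^T = Ri -> M = E^T *m Si *m E + H^T *m Ri *m H ->
  M *m xh = E^T *m Si *m a + H^T *m Ri *m yv ->
  bf Si (E *m x - a) (E *m x - a) + bf Ri (yv - H *m x) (yv - H *m x) =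
  bf M (x - xh) (x - xh) + (bf Si a a + bf Ri yv yv - bf M xh xh).
Proof.
move=> hS hR eM hxh.
have hM : M^T = M by rewrite eM raddfD /= !sym_cong.
have b1 : bf Si (E *m x) (E *m x) = bf (E^T *m Si *m E) x x by rewrite bfMl bfMr.
have b2 : bf Si (E *m x) a = bf (E^T *m Si) x a by rewrite bfMl.
have b3 : bf Si a (E *m x) = bf (E^T *m Si) x a by rewrite bfT hS b2.
have c1 : bf Ri (H *m x) (H *m x) = bf (H^T *m Ri *m H) x x by rewrite bfMl bfMr.
have c2 : bf Ri (H *m x) yv = bf (H^T *m Ri) x yv by rewrite bfMl.
have c3 : bf Ri yv (H *m x) = bf (H^T *m Ri) x yv by rewrite bfT hR c2.
have d1 : bf M x x = bf (E^T *m Si *m E) x x + bf (H^T *m Ri *m H) x x by rewrite eM bfDm.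
have d2 : bf M x xh = bf (E^T *m Si) x a + bf (H^T *m Ri) x yv.
  by rewrite bf1M hxh bfDr -!bf1M.
have d3 : bf M xh x = bf (E^T *m Si) x a + bf (H^T *m Ri) x yv by rewrite bfT hM d2.
rewrite !bfBl !bfBr b1 b2 b3 c1 c2 c3 d1 d2 d3.
ring.
Qed.
End Id1.

Section Ident2.
Context {R : realFieldType}.
Lemma wnormE p (S : 'M[R]_p) z : wnorm S z = bf (invmx S) z z.
Proof. by []. Qed.

Lemma ident2 {n1 n} (A : 'M[R]_(n1, n)) P Q x xh b : spd P -> spd Q ->
 wnorm P (x - xh) + wnorm Q (b - A *m x) =
 wnorm (invmx (invmx P + A^T *m invmx Q *m A))
   (x - (xh + invmx (invmx P + A^T *m invmx Q *m A) *m A^T *m invmx Q *m (b - A *m xh)))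
 + wnorm (A *m P *m A^T + Q) (b - A *m xh).
Proof.
move=> hP hQ.
have hGs : spd (invmx P + A^T *m invmx Q *m A).
  apply: spd_addpsd; first exact: spd_inv.
    by apply: sym_cong; rewrite trmx_inv hQ.1.
  by move=> z; apply: psd_cong; apply: spd_inv.
have hPm := spd_Pm A hP hQ.
rewrite !wnormE invmxK.
have e1 : b - A *m x = (b - A *m xh) - A *m (x - xh).
  by rewrite mulmxBr opprB addrA subrK.
have e2 : x - (xh + invmx (invmx P + A^T *m invmx Q *m A) *m A^T *m invmx Q *m (b - A *m xh))
   = (x - xh) - invmx (invmx P + A^T *m invmx Q *m A) *m ((A^T *m invmx Q) *m (b - A *m xh)).
  by rewrite opprD addrA !mulmxA.
rewrite e1 e2.
apply: id2_core.
- by rewrite trmx_inv hQ.1.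
- exact: hGs.1.
- by rewrite trmx_inv hGs.1.
- by rewrite mulmxV //; apply: spd_unit.
- by [].
- by [].
- rewrite woodbury //; try apply: spd_unit => //; exact: spd_inv.
Qed.
End Ident2.

Section Main.
Variables (R : realFieldType) (n1 n q m : nat).
Variables (E A : 'M[R]_(n1, n)) (B : 'M[R]_(n1, q)) (H : 'M[R]_(m, n)).
Variables (P0 : 'M[R]_n) (Q : 'M[R]_n1) (Rm : 'M[R]_m).
Variables (xbar0 : 'cV[R]_n) (u : nat -> 'cV[R]_q) (y : nat -> 'cV[R]_m).
Hypotheses (hr : \rank (col_mx E H) = n) (hP0 : spd P0) (hQ : spd Q) (hR : spd Rm).

Notation Pp := (Pplus E A B H P0 Q Rm xbar0 u y).
Notation Pm := (Pminus E A B H P0 Q Rm xbar0 u y).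
Notation xh := (xhat E A B H P0 Q Rm xbar0 u y).

Definition Mk k := E^T *m invmx (Pm k) *m E + H^T *m invmx Rm *m H.

Lemma Pp_S k : Pp k.+1 = invmx (Mk k).
Proof. by rewrite /Pplus /Mk /Pminus /Pplus /=; case: (kf _ _ _ _ _ _ _ _ _ _ k). Qed.

Lemma xh_S k : xh k.+1 = invmx (Mk k) *m H^T *m invmx Rm *m y k.+1
   + invmx (Mk k) *m E^T *m invmx (Pm k) *m (A *m xh k + B *m u k).
Proof. by rewrite /xhat /Mk /Pminus /Pplus /=; case: (kf _ _ _ _ _ _ _ _ _ _ k). Qed.

Lemma spd_Pp k : spd (Pp k).
Proof.
elim: k => [|k IH]; first exact: hP0.
rewrite Pp_S; apply: spd_inv; apply: spd_M => //; apply: spd_inv => //.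
exact: spd_Pm.
Qed.


Definition F (T j : nat) (x : nat -> 'cV[R]_n) : R :=
  wnorm (Pm j) (E *m x j.+1 - A *m xh j - B *m u j)
  + \sum_(j.+1 <= k < T) wnorm Q (E *m x k.+1 - A *m x k - B *m u k)
  + \sum_(j.+1 <= k < T.+1) wnorm Rm (y k - H *m x k).

Lemma step T j : (j.+2 <= T)%N -> exists c, forall x,
  F T j x = wnorm (Gsm E A B H P0 Q Rm xbar0 u y j.+1)
               (x j.+1 - xsm E A B H P0 Q Rm xbar0 u y j.+1 (x j.+2))
            + F T j.+1 x + c.
Proof.
move=> hj.
have hMu : Mk j \in unitmx.
  by apply: spd_unit; apply: spd_M => //; apply: spd_inv => //; exact: spd_Pm (spd_Pp j) hQ.
set a := A *m xh j + B *m u j.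
exists (bf (invmx (Pm j)) a a + bf (invmx Rm) (y j.+1) (y j.+1) - bf (Mk j) (xh j.+1) (xh j.+1)).
move=> x.
have e1 : wnorm (Pm j) (E *m x j.+1 - A *m xh j - B *m u j) + wnorm Rm (y j.+1 - H *m x j.+1)
   = wnorm (Pp j.+1) (x j.+1 - xh j.+1) + (bf (invmx (Pm j)) a a + bf (invmx Rm) (y j.+1) (y j.+1) - bf (Mk j) (xh j.+1) (xh j.+1)).
  rewrite !wnormE Pp_S invmxK -addrA -opprD -/a.
  apply: id1_core.
  - by rewrite trmx_inv (spd_Pm A (spd_Pp j) hQ).1.
  - by rewrite trmx_inv hR.1.
  - by [].
  - rewrite xh_S mulmxDr -!mulmxA !mulKVmx // addrC; by rewrite !mulmxA.
have e2 : wnorm (Pp j.+1) (x j.+1 - xh j.+1) + wnorm Q (E *m x j.+2 - A *m x j.+1 - B *m u j.+1)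
   = wnorm (Gsm E A B H P0 Q Rm xbar0 u y j.+1)
               (x j.+1 - xsm E A B H P0 Q Rm xbar0 u y j.+1 (x j.+2))
     + wnorm (Pm j.+1) (E *m x j.+2 - A *m xh j.+1 - B *m u j.+1).
  rewrite /xsm /Gsm /Pminus ![E *m x j.+2 - _ - B *m u j.+1]addrAC.
  exact: ident2 (spd_Pp j.+1) hQ.
have h1 : (j.+1 < T)%N by [].
have h2 : (j.+1 < T.+1)%N by apply: ltnW.
rewrite /F (big_ltn h1) (big_ltn h2).
lra.
Qed.


Lemma chain T i : (i < T)%N -> exists c, forall x,
  F T 0 x = \sum_(1 <= k < i.+1) wnorm (Gsm E A B H P0 Q Rm xbar0 u y k)
                               (x k - xsm E A B H P0 Q Rm xbar0 u y k (x k.+1))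
            + F T i x + c.
Proof.
elim: i => [|i IH] hi.
  by exists 0 => x; rewrite big_geq // add0r addr0.
have [c1 h1] := IH (ltnW hi).
have [c2 h2] := step T i hi.
exists (c1 + c2) => x.
rewrite h1 h2 [in RHS]big_nat_recr //=.
lra.
Qed.

Lemma main T N : (1 <= N)%N -> (N <= T - 1)%N ->
  exists c : R, forall x : nat -> 'cV[R]_n,
    JT E A B H P0 Q Rm xbar0 u y T x =
      \sum_(1 <= k < T - N) wnorm (Gsm E A B H P0 Q Rm xbar0 u y k)
                               (x k - xsm E A B H P0 Q Rm xbar0 u y k (x k.+1))
      + SC E A B H P0 Q Rm xbar0 u y T N x + c.
Proof.
move=> hN1 hN2.
have hT : (T - N - 1).+1 = (T - N)%N by lia.
have hi : (T - N - 1 < T)%N by lia.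
have [c hc] := chain T (T - N - 1) hi.
exists c => x.
have -> : JT E A B H P0 Q Rm xbar0 u y T x = F T 0 x by [].
have -> : SC E A B H P0 Q Rm xbar0 u y T N x = F T (T - N - 1) x by rewrite /SC /F hT.
by rewrite hc hT.
Qed.

End Main.

Theorem theorem3 (R : realFieldType) (n1 n q m : nat)
  (E A : 'M[R]_(n1, n)) (B : 'M[R]_(n1, q)) (H : 'M[R]_(m, n))
  (P0 : 'M[R]_n) (Q : 'M[R]_n1) (Rm : 'M[R]_m)
  (xbar0 : 'cV[R]_n) (u : nat -> 'cV[R]_q) (y : nat -> 'cV[R]_m)
  (T N : nat) :
  \rank (col_mx E H) = n ->
  spd P0 -> spd Q -> spd Rm ->
  (1 <= N)%N -> (N <= T - 1)%N ->
  exists c : R, forall x : nat -> 'cV[R]_n,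
    JT E A B H P0 Q Rm xbar0 u y T x =
      \sum_(1 <= k < T - N) wnorm (Gsm E A B H P0 Q Rm xbar0 u y k)
                               (x k - xsm E A B H P0 Q Rm xbar0 u y k (x k.+1))
      + SC E A B H P0 Q Rm xbar0 u y T N x + c.
Proof.
move=> hr hP0 hQ hR hN1 hN2.
exact: main.
Qed.
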